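(* For real $a,c,d$ and integer $k$, let \[ \begin{aligned} \lambda(k,a,c,d)={}&k^3\left(6a^4-6a^3+a^2+2ac+2d\right)\\ &+k^2\left(-384a^5+324a^4-42a^3-144a^2c-6ac-192ad-12d\right)\\ &+k\left(4608a^6-3072a^5+618a^4+2304a^3c-36a^3+144a^2c+4608a^2d-a^2+4ac+576ad+22d\right)\\ &+4608a^6-2688a^5-6144a^4c+300a^4-24576a^3d-4608a^2d-384ad-12d. \end{aligned} \] Let $a>\frac{22}{10}$, and let $c,d$ satisfy \[ \tfrac{1}{512}\left(-1536a^3+1728a^2-424a+25\right)\le c\le \tfrac{1}{128}\left(192a^2-104a+11\right), \] \[ \tfrac{1}{4096}\left(-384a^2+224a+512c-25\right)\le d\le \tfrac{1}{2048}\left(768a^3-512a^2-512ac+104a+192c-7\right). \] Then there exists an integer $k\ge 4$ such that $\lambda(k,a,c,d)<0$. *)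

(* Defs.v *)
From Stdlib Require Import Reals ZArith.
Open Scope R_scope.

Definition lambda (k : Z) (a c d : R) : R :=
  let K := IZR k in
  K ^ 3 * (6 * a ^ 4 - 6 * a ^ 3 + a ^ 2 + 2 * a * c + 2 * d)
  + K ^ 2 * (- 384 * a ^ 5 + 324 * a ^ 4 - 42 * a ^ 3 - 144 * a ^ 2 * c
             - 6 * a * c - 192 * a * d - 12 * d)
  + K * (4608 * a ^ 6 - 3072 * a ^ 5 + 618 * a ^ 4 + 2304 * a ^ 3 * c
         - 36 * a ^ 3 + 144 * a ^ 2 * c + 4608 * a ^ 2 * d - a ^ 2
         + 4 * a * c + 576 * a * d + 22 * d)
  + (4608 * a ^ 6 - 2688 * a ^ 5 - 6144 * a ^ 4 * c + 300 * a ^ 4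
     - 24576 * a ^ 3 * d - 4608 * a ^ 2 * d - 384 * a * d - 12 * d).

(* Main.v *)
Require Import Defs.
From Stdlib Require Import Reals ZArith Lra Lia Psatz.
Open Scope R_scope.

Definition lamR (K a c d : R) : R :=
  K ^ 3 * (6 * a ^ 4 - 6 * a ^ 3 + a ^ 2 + 2 * a * c + 2 * d)
  + K ^ 2 * (- 384 * a ^ 5 + 324 * a ^ 4 - 42 * a ^ 3 - 144 * a ^ 2 * c
             - 6 * a * c - 192 * a * d - 12 * d)
  + K * (4608 * a ^ 6 - 3072 * a ^ 5 + 618 * a ^ 4 + 2304 * a ^ 3 * c
         - 36 * a ^ 3 + 144 * a ^ 2 * c + 4608 * a ^ 2 * d - a ^ 2
         + 4 * a * c + 576 * a * d + 22 * d)
  + (4608 * a ^ 6 - 2688 * a ^ 5 - 6144 * a ^ 4 * c + 300 * a ^ 4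
     - 24576 * a ^ 3 * d - 4608 * a ^ 2 * d - 384 * a * d - 12 * d).

Definition clo (a : R) : R := (1 / 512) * (- 1536 * a ^ 3 + 1728 * a ^ 2 - 424 * a + 25).
Definition dlo (a c : R) : R := (1 / 4096) * (- 384 * a ^ 2 + 224 * a + 512 * c - 25).
Definition Ldf (a K : R) : R := 2*K^3 + K^2*(-192*a-12) + K*(4608*a^2+576*a+22) - 24576*a^3 - 4608*a^2 - 384*a - 12.
Definition Lcpf (a K : R) : R := 2*a*K^3 + K^2*(-144*a^2-6*a) + K*(2304*a^3+144*a^2+4*a) - 6144*a^4 + Ldf a K / 8.
Definition Vf (a K : R) : R := lamR K a (clo a) (dlo a (clo a)).

Lemma Ld_neg (s t : R) : 0 <= s -> 0 < t -> t <= 1 ->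
  Ldf (22/10+s) (32*(22/10+s)+t) < 0.
Proof.
  intros Hs Ht1 Ht2.
  assert (E : Ldf (22/10+s) (32*(22/10+s)+t) = s^0*((-9887772/125) + (-195866/25)*t^1 + (-12)*t^2 + (2)*t^3) + s^1*((-2796736/25) + (-34752/5)*t^1) + s^2*((-262656/5) + (-1536)*t^1) + s^3*((-8192))) by (unfold Vf, lamR, clo, dlo, Lcpf, Ldf; field).
  rewrite E.
  assert (T2 : 0 <= t^2 <= 1) by (split; nra).
  assert (T3 : 0 <= t^3 <= 1) by (split; nra).
  assert (H0 : (-9887772/125) + (-195866/25)*t^1 + (-12)*t^2 + (2)*t^3 < 0) by lra.
  assert (H1 : s^1*((-2796736/25) + (-34752/5)*t^1) <= 0) by (rewrite <- (Rmult_0_r (s^1)); apply Rmult_le_compat_l; [apply pow_le; lra | lra]).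
  assert (H2 : s^2*((-262656/5) + (-1536)*t^1) <= 0) by (rewrite <- (Rmult_0_r (s^2)); apply Rmult_le_compat_l; [apply pow_le; lra | lra]).
  assert (H3 : s^3*((-8192)) <= 0) by (rewrite <- (Rmult_0_r (s^3)); apply Rmult_le_compat_l; [apply pow_le; lra | lra]).
  assert (H00 : s^0*((-9887772/125) + (-195866/25)*t^1 + (-12)*t^2 + (2)*t^3) < 0) by (simpl; lra).
  lra.
Qed.
Lemma Lcp_neg (s t : R) : 0 <= s -> 0 < t -> t <= 1 ->
  Lcpf (22/10+s) (32*(22/10+s)+t) < 0.
Proof.
  intros Hs Ht1 Ht2.
  assert (E : Lcpf (22/10+s) (32*(22/10+s)+t) = s^0*((-451816227/1250) + (-5154897/500)*t^1 + (10881/50)*t^2 + (93/20)*t^3) + s^1*((-80790264/125) + (-326804/25)*t^1 + (1026/5)*t^2 + (2)*t^3) + s^2*((-10822336/25) + (-27504/5)*t^1 + (48)*t^2) + s^3*((-643584/5) + (-768)*t^1) + s^4*((-14336))) by (unfold Vf, lamR, clo, dlo, Lcpf, Ldf; field).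
  rewrite E.
  assert (T2 : 0 <= t^2 <= 1) by (split; nra).
  assert (T3 : 0 <= t^3 <= 1) by (split; nra).
  assert (H0 : (-451816227/1250) + (-5154897/500)*t^1 + (10881/50)*t^2 + (93/20)*t^3 < 0) by lra.
  assert (H1 : s^1*((-80790264/125) + (-326804/25)*t^1 + (1026/5)*t^2 + (2)*t^3) <= 0) by (rewrite <- (Rmult_0_r (s^1)); apply Rmult_le_compat_l; [apply pow_le; lra | lra]).
  assert (H2 : s^2*((-10822336/25) + (-27504/5)*t^1 + (48)*t^2) <= 0) by (rewrite <- (Rmult_0_r (s^2)); apply Rmult_le_compat_l; [apply pow_le; lra | lra]).
  assert (H3 : s^3*((-643584/5) + (-768)*t^1) <= 0) by (rewrite <- (Rmult_0_r (s^3)); apply Rmult_le_compat_l; [apply pow_le; lra | lra]).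
  assert (H4 : s^4*((-14336)) <= 0) by (rewrite <- (Rmult_0_r (s^4)); apply Rmult_le_compat_l; [apply pow_le; lra | lra]).
  assert (H00 : s^0*((-451816227/1250) + (-5154897/500)*t^1 + (10881/50)*t^2 + (93/20)*t^3) < 0) by (simpl; lra).
  lra.
Qed.
Lemma V_neg (s t : R) : 0 <= s -> 0 < t -> t <= 1 ->
  Vf (22/10+s) (32*(22/10+s)+t) < 0.
Proof.
  intros Hs Ht1 Ht2.
  assert (E : Vf (22/10+s) (32*(22/10+s)+t) = s^0*((-9159040377927/10000000) + (-35126555607/4000000)*t^1 + (630486153/800000)*t^2) + s^1*((-6886771163469/2000000) + (11322555723/800000)*t^1 + (16312851/6400)*t^2) + s^2*((-265034748609/50000) + (124361229/2000)*t^1 + (602727/200)*t^2) + s^3*((-1096812561/250) + (3358869/50)*t^1 + (16881/10)*t^2) + s^4*((-53107128/25) + (167184/5)*t^1 + (456)*t^2) + s^5*((-15111264/25) + (40368/5)*t^1 + (48)*t^2) + s^6*((-469248/5) + (768)*t^1) + s^7*((-6144))) by (unfold Vf, lamR, clo, dlo, Lcpf, Ldf; field).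
  rewrite E.
  assert (T2 : 0 <= t^2 <= 1) by (split; nra).
  assert (T3 : 0 <= t^3 <= 1) by (split; nra).
  assert (H0 : (-9159040377927/10000000) + (-35126555607/4000000)*t^1 + (630486153/800000)*t^2 < 0) by lra.
  assert (H1 : s^1*((-6886771163469/2000000) + (11322555723/800000)*t^1 + (16312851/6400)*t^2) <= 0) by (rewrite <- (Rmult_0_r (s^1)); apply Rmult_le_compat_l; [apply pow_le; lra | lra]).
  assert (H2 : s^2*((-265034748609/50000) + (124361229/2000)*t^1 + (602727/200)*t^2) <= 0) by (rewrite <- (Rmult_0_r (s^2)); apply Rmult_le_compat_l; [apply pow_le; lra | lra]).
  assert (H3 : s^3*((-1096812561/250) + (3358869/50)*t^1 + (16881/10)*t^2) <= 0) by (rewrite <- (Rmult_0_r (s^3)); apply Rmult_le_compat_l; [apply pow_le; lra | lra]).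
  assert (H4 : s^4*((-53107128/25) + (167184/5)*t^1 + (456)*t^2) <= 0) by (rewrite <- (Rmult_0_r (s^4)); apply Rmult_le_compat_l; [apply pow_le; lra | lra]).
  assert (H5 : s^5*((-15111264/25) + (40368/5)*t^1 + (48)*t^2) <= 0) by (rewrite <- (Rmult_0_r (s^5)); apply Rmult_le_compat_l; [apply pow_le; lra | lra]).
  assert (H6 : s^6*((-469248/5) + (768)*t^1) <= 0) by (rewrite <- (Rmult_0_r (s^6)); apply Rmult_le_compat_l; [apply pow_le; lra | lra]).
  assert (H7 : s^7*((-6144)) <= 0) by (rewrite <- (Rmult_0_r (s^7)); apply Rmult_le_compat_l; [apply pow_le; lra | lra]).
  assert (H00 : s^0*((-9159040377927/10000000) + (-35126555607/4000000)*t^1 + (630486153/800000)*t^2) < 0) by (simpl; lra).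
  lra.
Qed.
Lemma apply_neg (f : R -> R -> R) (a K : R) :
  (forall s t, 0 <= s -> 0 < t -> t <= 1 -> f (22/10+s) (32*(22/10+s)+t) < 0) ->
  22/10 < a -> 32*a < K -> K <= 32*a + 1 -> f a K < 0.
Proof.
  intros H Ha H1 H2.
  specialize (H (a - 22/10) (K - 32*a)).
  replace (22/10 + (a - 22/10)) with a in H by ring.
  replace (32*a + (K - 32*a)) with K in H by ring.
  apply H; lra.
Qed.

Theorem mainTheorem12 (a c d : R)
  (ha : 22 / 10 < a)
  (hc1 : (1 / 512) * (- 1536 * a ^ 3 + 1728 * a ^ 2 - 424 * a + 25) <= c)
  (hc2 : c <= (1 / 128) * (192 * a ^ 2 - 104 * a + 11))
  (hd1 : (1 / 4096) * (- 384 * a ^ 2 + 224 * a + 512 * c - 25) <= d)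
  (hd2 : d <= (1 / 2048) * (768 * a ^ 3 - 512 * a ^ 2 - 512 * a * c + 104 * a
                            + 192 * c - 7)) :
  exists k : Z, (4 <= k)%Z /\ lambda k a c d < 0.
Proof.
  destruct (archimed (32*a)) as [A1 A2].
  exists (up (32*a)).
  set (K := IZR (up (32*a))) in *.
  split.
  { assert (4 < up (32*a))%Z; [|lia].
    apply lt_IZR. fold K. lra. }
  assert (L1 := apply_neg Ldf a K Ld_neg ha A1 ltac:(lra)).
  assert (L2 := apply_neg Lcpf a K Lcp_neg ha A1 ltac:(lra)).
  assert (L3 := apply_neg Vf a K V_neg ha A1 ltac:(lra)).
  assert (E : lambda (up (32*a)) a c d
     = Vf a K + Ldf a K * (d - dlo a c) + Lcpf a K * (c - clo a)).
  { unfold lambda, Vf, lamR, clo, dlo, Lcpf, Ldf. fold K. field. }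
  rewrite E.
  assert (P1 : Ldf a K * (d - dlo a c) <= 0).
  { rewrite <- (Rmult_0_r (Ldf a K)). apply Rmult_le_compat_neg_l; [lra|].
    unfold dlo; lra. }
  assert (P2 : Lcpf a K * (c - clo a) <= 0).
  { rewrite <- (Rmult_0_r (Lcpf a K)). apply Rmult_le_compat_neg_l; [lra|].
    unfold clo; lra. }
  lra.
Qed.
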